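(* Let $\mathcal{S}_1,\dots,\mathcal{S}_n\subseteq\mathbb{R}^D$ be independent linear subspaces (i.e. $\sum_{\ell=1}^n d_\ell=\dim(\sum_\ell\mathcal{S}_\ell)$, $d_\ell=\dim\mathcal{S}_\ell$), and let $\mathcal{X}=\{\boldsymbol{x}_1,\dots,\boldsymbol{x}_N\}\subseteq\bigcup_\ell\mathcal{S}_\ell$ consist of unit-norm vectors such that each $\mathcal{S}_\ell$ contains at least $d_\ell$ points of $\mathcal{X}$ spanning $\mathcal{S}_\ell$; the class of a point is the index $\ell$ of the subspace containing it. Let $k\ge\sum_\ell d_\ell$. With $\lambda=\infty$, compute $\mathcal{X}_0=\mathcal{X}_0^{(k)}$ by farthest first search ($\mathcal{X}_0^{(1)}=\{\boldsymbol{x}_j\}$ for an arbitrary $j$; for $i=1,\dots,k-1$, $\mathcal{X}_0^{(i+1)}=\mathcal{X}_0^{(i)}\cup\{\boldsymbol{x}\}$ with $\boldsymbol{x}\in\arg\max_{\boldsymbol{x}_j\in\mathcal{X}}f_\infty(\boldsymbol{x}_j,\mathcal{X}_0^{(i)})$); for each $j$ let $\boldsymbol{c}_j=(c_{1j},\dots,c_{Nj})$ be an optimal solution of $\min_{\boldsymbol{c}\in\mathbb{R}^N}\|\boldsymbol{c}\|_1$ s.t. $\boldsymbol{x}_j=\sum_{i:\boldsymbol{x}_i\in\mathcal{X}_0}c_i\boldsymbol{x}_i$; let $\mathcal{C}_0^{(\ell)}\subseteq\mathcal{X}_0$ be the exemplars of class $\ell$ (their labels being given); and assign each $\boldsymbol{x}_j\in\mathcal{X}\setminus\mathcal{X}_0$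 to a class in $\arg\min_\ell\|\boldsymbol{x}_j-\sum_{i:\boldsymbol{x}_i\in\mathcal{C}_0^{(\ell)}}c_{ij}\boldsymbol{x}_i\|_2$. Then every point receives its correct class label.
   Context: $f_\infty(\boldsymbol{x}_j,\mathcal{X}_0):=\min_{\boldsymbol{c}\in\mathbb{R}^N}\|\boldsymbol{c}\|_1$ subject to $\boldsymbol{x}_j=\sum_{i:\boldsymbol{x}_i\in\mathcal{X}_0}c_i\boldsymbol{x}_i$, with value $\infty$ if infeasible. *)

(* Defs.v *)
From HB Require Import structures.
From mathcomp Require Import all_boot all_order all_algebra.
From mathcomp Require Import all_classical all_reals ereal.
Set Implicit Arguments. Unset Strict Implicit. Unset Printing Implicit Defensive.
Import Order.TTheory GRing.Theory Num.Theory.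
Local Open Scope ring_scope.
Local Open Scope classical_set_scope.

Section Defs.
Variables (R : realType) (D N : nat) (X : 'I_N -> 'rV[R]_D).

(* "x_i \in X0" where X0 is given by a set of indices of chosen points. *)
Definition inX0 (S : {set 'I_N}) (i : 'I_N) : bool :=
  [exists i0 in S, X i0 == X i].

Definition feasible (S : {set 'I_N}) (x : 'rV[R]_D) (c : 'I_N -> R) : Prop :=
  x = \sum_(i | inX0 S i) c i *: X i.

Definition l1norm (c : 'I_N -> R) : R := \sum_i `|c i|.

(* f_infty(x, X0) = min ||c||_1 over feasible c, +oo if infeasible *)
Definition f_inf (x : 'rV[R]_D) (S : {set 'I_N}) : \bar R :=
  ereal_inf [set (l1norm c)%:E | c in feasible S x].

Definition optimal (S : {set 'I_N}) (x : 'rV[R]_D) (c : 'I_N -> R) : Prop :=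
  feasible S x c /\ forall c', feasible S x c' -> l1norm c <= l1norm c'.

End Defs.

Definition norm2 (R : realType) (D : nat) (v : 'rV[R]_D) : R :=
  Num.sqrt (\sum_i v 0 i ^+ 2).

(* Main.v *)
Require Import Defs.
From HB Require Import structures.
From mathcomp Require Import all_boot all_order all_algebra.
From mathcomp Require Import all_classical all_reals ereal.
From mathcomp Require Import topology normedtype derive matrix_normedtype.
Import numFieldNormedType.Exports.
Import Order.TTheory GRing.Theory Num.Theory.
Local Open Scope ring_scope.

Section Span.
Local Open Scope classical_set_scope.

Variables (R : realType) (D N : nat) (X : 'I_N -> 'rV[R]_D).

Definition V (S : {set 'I_N}) : 'M[R]_D := (\sum_(i0 in S) <<X i0>>)%MS.

Lemma feas_sub S x c : feasible X S x c -> (x <= V S)%MS.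
Proof.
move=> ->; apply: summx_sub => i /existsP[i0 /andP[i0S /eqP e]].
apply: scalemx_sub; rewrite -e; apply: (sumsmx_sup i0) => //.
by rewrite genmxE.
Qed.

Lemma sub_feas S x : (x <= V S)%MS -> exists c, feasible X S x c.
Proof.
move=> /sub_sums_genmxP[u ->].
exists (fun i => if i \in S then u i 0 0 else 0).
rewrite /feasible [RHS](bigID (fun i => i \in S)) /= [X in _ + X]big1 ?addr0; last first.
  by move=> i /andP[_ /negbTE ->]; rewrite scale0r.
rewrite [RHS](eq_bigl (fun i => i \in S)); last first.
  move=> i; apply/andP/idP => [[]//|iS]; split=> //.
  by apply/existsP; exists i; rewrite iS eqxx.
apply: eq_bigr => i iS; rewrite iS.
by rewrite {1}[u i]mx11_scalar mul_scalar_mx.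
Qed.

Lemma finf_fin S x c : feasible X S x c -> (f_inf X x S < +oo)%E.
Proof.
move=> fc; apply: (le_lt_trans (y := (l1norm c)%:E)); last exact: ltry.
by apply: ereal_inf_lbound; exists c.
Qed.

Lemma finf_inf S x : ~~ (x <= V S)%MS -> f_inf X x S = +oo%E.
Proof.
move=> nx; rewrite /f_inf.
suff -> : [set (l1norm c)%:E | c in feasible X S x] = set0 by rewrite ereal_inf0.
apply/seteqP; split => // y /= [c fc _]; move/negP: nx; apply.
exact: feas_sub fc.
Qed.

End Span.

Arguments V {R D N} X S.
Arguments feas_sub {R D N X S x c}.
Arguments sub_feas {R D N X S x}.
Arguments finf_fin {R D N X S x c}.
Arguments finf_inf {R D N X S x}.

Lemma norm2_0 (R : realType) (D : nat) : norm2 (0 : 'rV[R]_D) = 0.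
Proof.
rewrite /norm2 big1 ?sqrtr0 // => i _; by rewrite mxE expr0n.
Qed.

Lemma span_all (R : realType) (D n N : nat) (S : 'I_n -> 'M[R]_D)
    (X : 'I_N -> 'rV[R]_D) (lab : 'I_N -> 'I_n) (k : nat) :
  (\sum_(l < n) \rank (S l) = \rank (\sum_(l < n) S l)%MS)%N ->
  (forall j, norm2 (X j) = 1) ->
  (forall j, (X j <= S (lab j))%MS) ->
  (\sum_(l < n) \rank (S l) <= k)%N ->
  forall (X0s : nat -> {set 'I_N}) (j0 : 'I_N) (p : nat -> 'I_N),
  X0s 1%N = [set j0] ->
  (forall i, (1 <= i < k)%N ->
     (forall j, f_inf X (X j) (X0s i) <= f_inf X (X (p i)) (X0s i))%E /\
     X0s i.+1 = X0s i :|: [set p i]) ->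
  forall j, (X j <= V X (X0s k))%MS.
Proof.
move=> hdir hn hS hk X0s j0 p h1 hstep j.
have nz i : X i != 0.
  by apply/eqP => e; move: (hn i); rewrite e norm2_0 => /eqP; rewrite eq_sym oner_eq0.
have T_ge i : (X i <= \sum_(l < n) S l)%MS.
  by apply: submx_trans (hS i) _; apply: (sumsmx_sup (lab i)).
have k1 : (1 <= k)%N.
  apply: leq_trans hk; rewrite (bigD1 (lab j)) //=.
  have r1 : (0 < \rank (X j))%N by rewrite rank_rV nz.
  apply: leq_trans (leq_addr _ _); exact: leq_trans r1 (mxrankS (hS j)).
have inv m : (m.+1 <= k)%N ->
    [forall j, (X j <= V X (X0s m.+1))%MS] || (m.+1 <= \rank (V X (X0s m.+1)))%N.
  elim: m => [_|m IH hm].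
    by rewrite h1 /V big_set1 genmxE rank_rV nz orbT.
  have [hmax hX0] := hstep m.+1 hm.
  have sWW : (V X (X0s m.+1) <= V X (X0s m.+2))%MS.
    apply/sumsmx_subP => i0 i0S; apply: (sumsmx_sup i0) => //.
    by rewrite hX0 finset.in_setU i0S.
  case: (boolP [forall j, (X j <= V X (X0s m.+1))%MS]) => [/forallP hall | hnall].
    apply/orP; left; apply/forallP => j'; exact: submx_trans (hall j') sWW.
  have := IH (ltnW hm); rewrite (negbTE hnall) /= => hr.
  move/forallPn: hnall => [j1 hj1].
  have finfp : f_inf X (X (p m.+1)) (X0s m.+1) = +oo%E.
    by apply/eqP; rewrite eq_le leey /= -(finf_inf hj1) hmax.
  have npW : ~~ (X (p m.+1) <= V X (X0s m.+1))%MS.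
    apply/negP => /sub_feas[c /finf_fin]; by rewrite finfp ltxx.
  have pW' : (X (p m.+1) <= V X (X0s m.+2))%MS.
    apply: (sumsmx_sup (p m.+1)); first by rewrite hX0 finset.in_setU finset.in_set1 eqxx orbT.
    by rewrite genmxE.
  apply/orP; right; apply: leq_ltn_trans hr _.
  have [le eqC] := mxrank_leqif_sup sWW.
  rewrite ltn_neqAle le andbT eqC; apply/negP => h.
  by move/negP: npW; apply; exact: submx_trans pW' h.
have := inv k.-1; rewrite prednK // leqnn => /(_ isT) /orP[/forallP //|hr].
have sVT : (V X (X0s k) <= \sum_(l < n) S l)%MS.
  by apply/sumsmx_subP => i0 _; rewrite genmxE.
have [_ eqC] := mxrank_leqif_sup sVT.
apply: submx_trans (T_ge j) _.
rewrite -eqC eqn_leq mxrankS //= -hdir.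
exact: leq_trans hk hr.
Qed.

Section Opt.
Local Open Scope classical_set_scope.

Lemma exists_opt (R : realType) (D N : nat) (X : 'I_N -> 'rV[R]_D)
   (S : {set 'I_N}) (x : 'rV[R]_D) :
  (exists c, feasible X S x c) -> exists c, optimal X S x c.
Proof.
move=> [c0 fc0].
pose f (v : 'rV[R]_N) : R := l1norm (fun i => v 0 i).
pose g (v : 'rV[R]_N) : 'rV[R]_D := \sum_(i | inX0 X S i) v 0 i *: X i.
pose v0 : 'rV[R]_N := \row_i c0 i.
pose A := [set v | g v = x /\ f v <= f v0].
have fv0 : f v0 = l1norm c0 by rewrite /f /l1norm; apply: eq_bigr => i _; rewrite mxE.
have A0 : A !=set0.
  exists v0; split => //; rewrite fc0 /g; apply: eq_bigr => i _; by rewrite mxE.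
have fge (v : 'rV[R]_N) i : `|v 0 i| <= f v.
  rewrite /f /l1norm (bigD1 i) //= lerDl; exact: sumr_ge0.
have f0 (v : 'rV[R]_N) : 0 <= f v by apply: sumr_ge0.
have cf : continuous f.
  apply: continuous_big.
    exact: add_continuous.
  move=> i _ v; apply: (@continuous_comp _ _ _ (fun w : 'rV[R]_N => w 0 i) (@Num.norm _ R)).
  exact: coord_continuous. exact: norm_continuous.
have cg : continuous g.
  apply: continuous_big.
    exact: add_continuous.
  move=> i _ v; apply: continuousZr_tmp; exact: coord_continuous.
have cA : compact A.
  apply: bounded_closed_compact.
    exists (f v0); split; first exact: num_real.
    move=> M hM v [_ hv].
    rewrite /Num.norm /= mx_normrE.
    elim/big_ind: _ => //.
    - exact: le_trans (f0 v0) (ltW hM).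
    - by move=> a b ha hb; rewrite ge_max ha hb.
    - move=> [i1 i2] _ /=; rewrite (ord1 i1).
      exact: le_trans (fge v i2) (le_trans hv (ltW hM)).
  have -> : A = g @^-1` [set x] `&` f @^-1` [set r | r <= f v0] by [].
  apply: closedI.
    apply: (proj1 (continuous_closedP _) cg).
    apply: accessible_closed_set1; apply: hausdorff_accessible; exact: norm_hausdorff.
  apply: (proj1 (continuous_closedP _) cf); exact: closed_le.
have [c /set_mem [gc fc] cmin] := EVT_min_rV A0 cA (continuous_subspaceT cf).
exists (fun i => c 0 i); split; first by rewrite /feasible -gc.
move=> c' fc'.
have [hle|hlt] := leP (l1norm c') (l1norm c0); last first.
  by apply: le_trans (ltW hlt); rewrite -fv0.
pose v' : 'rV[R]_N := \row_i c' i.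
have fv' : f v' = l1norm c' by rewrite /f /l1norm; apply: eq_bigr => i _; rewrite mxE.
rewrite -fv'; apply: cmin; apply/mem_set; split.
  by rewrite fc' /g; apply: eq_bigr => i _; rewrite mxE.
by rewrite fv' fv0.
Qed.

End Opt.
Lemma part2 (R : realType) (D n N : nat) (S : 'I_n -> 'M[R]_D)
    (X : 'I_N -> 'rV[R]_D) (lab : 'I_N -> 'I_n) (Q : pred 'I_N) (c : 'I_N -> R) (j : 'I_N) :
  (\sum_(l < n) \rank (S l) = \rank (\sum_(l < n) S l)%MS)%N ->
  (forall j, norm2 (X j) = 1) ->
  (forall j, (X j <= S (lab j))%MS) ->
  X j = \sum_(i | Q i) c i *: X i ->
  forall l : 'I_n,
       (forall l' : 'I_n,
          norm2 (X j - \sum_(i | Q i && (lab i == l)) c i *: X i)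
          <= norm2 (X j - \sum_(i | Q i && (lab i == l')) c i *: X i)) ->
       l = lab j.
Proof.
move=> hdir hn hS hX l hl.
have dx : mxdirect (\sum_(l < n) S l).
  by rewrite mxdirectE /= hdir.
set P := fun l => \sum_(i | Q i && (lab i == l)) c i *: X i.
have PS l' : (P l' <= S l')%MS.
  apply: summx_sub => i /andP[_ /eqP <-]; exact: scalemx_sub.
have hsum : X j = \sum_(l' < n) P l'.
  by rewrite hX (partition_big lab xpredT).
have P0 l' : l' != lab j -> P l' = 0.
  move=> hl'.
  have e : P l' = X j - \sum_(l'' | l'' != l') P l''.
    by rewrite hsum (bigD1 l') //= addrK.
  apply/eqP; rewrite -submx0.
  move/mxdirect_sumsP: dx => /(_ l' isT) <-.
  rewrite sub_capmx PS /= e.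
  rewrite addmx_sub //.
    by apply: submx_trans (hS j) _; apply: (sumsmx_sup (lab j)); rewrite // eq_sym.
  by rewrite eqmx_opp; apply: summx_sub_sums.
have Pj : P (lab j) = X j.
  rewrite hsum (bigD1 (lab j)) //= big1 ?addr0 // => l'' hl''; exact: P0.
have [->//|hne] := eqVneq l (lab j).
have := hl (lab j); rewrite -/(P l) -/(P (lab j)) Pj P0 // subrr subr0 norm2_0 hn.
by rewrite ler10.
Qed.

Theorem theorem5 (R : realType) (D n N : nat) (S : 'I_n -> 'M[R]_D)
    (X : 'I_N -> 'rV[R]_D) (lab : 'I_N -> 'I_n) (k : nat) :
  (* independent subspaces *)
  (\sum_(l < n) \rank (S l) = \rank (\sum_(l < n) S l)%MS)%N ->
  (* unit-norm points *)
  (forall j, norm2 (X j) = 1) ->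
  (* each point lies in the subspace of its class *)
  (forall j, (X j <= S (lab j))%MS) ->
  (* the points of X lying in S_l span S_l *)
  (forall l, (S l == \sum_(j | submx (X j) (S l)) <<X j>>)%MS) ->
  (\sum_(l < n) \rank (S l) <= k)%N ->
  forall (X0s : nat -> {set 'I_N}) (j0 : 'I_N) (p : nat -> 'I_N),
  X0s 1%N = [set j0] ->
  (forall i, (1 <= i < k)%N ->
     (forall j, f_inf X (X j) (X0s i) <= f_inf X (X (p i)) (X0s i))%E /\
     X0s i.+1 = X0s i :|: [set p i]) ->
  (forall j, exists c, optimal X (X0s k) (X j) c) /\
  (forall c : 'I_N -> 'I_N -> R,
     (forall j, optimal X (X0s k) (X j) (fun i => c i j)) ->
     forall j, ~~ inX0 X (X0s k) j ->
     forall l : 'I_n,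
       (forall l' : 'I_n,
          norm2 (X j - \sum_(i | inX0 X (X0s k) i && (lab i == l)) c i j *: X i)
          <= norm2 (X j - \sum_(i | inX0 X (X0s k) i && (lab i == l')) c i j *: X i)) ->
       l = lab j).

Proof.
move=> hdir hn hS hspan hk X0s j0 p h1 hstep.
split.
  move=> j; apply: exists_opt; apply: sub_feas.
  exact: (span_all _ _ _ _ _ _ _ _ hdir hn hS hk _ _ _ h1 hstep j).
move=> c hc j _ l hl.
exact: (part2 _ _ _ _ _ _ _ _ (fun i => c i j) _ hdir hn hS (hc j).1 _ hl).
Qed.
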